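(* Let $\sigma=\{\lambda_1,\ldots,\lambda_n\}$ be a set of $n$ distinct real numbers and let $\mathcal{F}$ be a finite set of real numbers. Then for any connected graph $G$ on $n\geq 2$ vertices there exists a matrix $A\in\mathcal{S}(G)$ with the strong spectral property such that $\operatorname{spec}(A)=\sigma$ and none of the diagonal entries of $A$ lies in $\mathcal{F}$.
   Context: For a simple graph $G$ on vertex set $\{1,\ldots,n\}$, $\mathcal{S}(G)$ is the set of all $n\times n$ real symmetric matrices $A=(a_{ij})$ such that for $i\neq j$, $a_{ij}\neq 0$ if and only if $\{i,j\}$ is an edge of $G$ (diagonal entries are unrestricted). A real symmetric matrix $A$ has the strong spectral property (SSP) if the only real symmetric matrix $X$ satisfying $A\circ X=O$, $I\circ X=O$ and $AX-XA=O$ is $X=O$, where $\circ$ is the entrywise product. $\operatorname{spec}(A)$ denotes the multiset of eigenvalues of $A$. *)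

(* Defs.v *)
From HB Require Import structures.
From mathcomp Require Import all_boot all_order all_algebra.
From mathcomp Require Import reals.
Set Implicit Arguments. Unset Strict Implicit. Unset Printing Implicit Defensive.
Import Order.TTheory GRing.Theory Num.Theory.
Local Open Scope ring_scope.

Definition simple_graph (n : nat) (e : rel 'I_n) : Prop :=
  (forall i j, e i j = e j i) /\ (forall i, e i i = false).

Definition connected_graph (n : nat) (e : rel 'I_n) : Prop :=
  forall i j, connect e i j.

Definition in_SG (R : realType) (n : nat) (e : rel 'I_n) (A : 'M[R]_n) : Prop :=
  A^T = A /\ (forall i j : 'I_n, i != j -> (A i j != 0) = e i j).

Definition SSP (R : realType) (n : nat) (A : 'M[R]_n) : Prop :=
  forall X : 'M[R]_n, X^T = X ->
    map2_mx *%R A X = 0 -> map2_mx *%R (1%:M : 'M[R]_n) X = 0 ->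
    A *m X - X *m A = 0 -> X = 0.

(* spec(A) = {lam_1,...,lam_n} as multisets: the characteristic polynomial
   (whose roots with multiplicity form spec(A)) is prod_i (X - lam_i). *)
Definition spec_eq (R : realType) (n : nat) (A : 'M[R]_n) (lam : 'I_n -> R) : Prop :=
  char_poly A = \prod_(i < n) ('X - (lam i)%:P).

(* Main.v *)
Require Import Defs.
From HB Require Import structures.
From mathcomp Require Import all_boot all_order all_algebra.
From mathcomp Require Import reals.
From mathcomp Require Import all_classical all_reals all_analysis.
From mathcomp.algebra_tactics Require Import ring lra.
Import Order.TTheory GRing.Theory Num.Theory.
Import numFieldNormedType.Exports.
Set Implicit Arguments. Unset Strict Implicit. Unset Printing Implicit Defensive.
Local Open Scope ring_scope.

Lemma contr_fix (R : realType) (V : completeNormedModType R) (f : V -> V) (q : R) :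
  0 <= q -> q < 1 -> (forall x y, `|f x - f y| <= q * `|x - y|) -> exists x, x = f x.
Proof.
move=> q0 q1 Hf.
pose g := @mkfun _ _ [set: V] [set: V] f (fun _ _ => I).
have : is_contraction g.
  exists (NngNum q0); split => //.
  by move=> [x y] _ /=; apply: Hf.
move=> /banach_fixed_point => /(_ closedT) [].
  by exists 0.
by move=> x _ hx; exists x.
Qed.

Definition MM (R : realType) n := 'M[R]_(n,n).
HB.instance Definition _ (R : realType) n := NormedModule.copy (MM R n) 'M[R]_(n,n).
HB.instance Definition _ (R : realType) n := Complete.copy (MM R n) 'M[R]_(n,n).

Section Norms.
Variable R : realType.

Lemma mxnorm_ge a b (M : 'M[R]_(a,b)) i j : `|M i j| <= `|M|.
Proof.
rewrite [X in _ <= X]/Num.norm /= mx_normrE.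
exact: (le_bigmax _ (fun ij : 'I_a * 'I_b => `|M ij.1 ij.2|) (i, j)).
Qed.

Lemma mxnorm_le a b (M : 'M[R]_(a,b)) c :
  0 <= c -> (forall i j, `|M i j| <= c) -> `|M| <= c.
Proof.
move=> c0 H; rewrite [X in X <= _]/Num.norm /= mx_normrE.
by apply: bigmax_le => // -[i j] _; apply: H.
Qed.

Lemma sum_bound n (a b : 'I_n -> R) A B :
  (forall k, `|a k| <= A) -> (forall k, `|b k| <= B) ->
  `|\sum_k a k * b k| <= n%:R * (A * B).
Proof.
move=> Ha Hb.
apply: (le_trans (ler_norm_sum _ _ _)).
have -> : n%:R * (A * B) = \sum_(k < n) (A * B).
  by rewrite sumr_const card_ord mulr_natl.
apply: ler_sum => k _; rewrite normrM.
apply: ler_pM => //; exact: Ha || exact: Hb.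
Qed.

Lemma div_bound (x d c g : R) : 0 < g -> g <= `|d| -> `|x| <= c -> `|x / d| <= c / g.
Proof.
move=> g0 gd xc.
have d0 : 0 < `|d| by apply: lt_le_trans gd.
rewrite normrM normrV ?unitfE -?normr_gt0 //.
apply: ler_pM => //; rewrite lef_pV2 ?posrE //.
Qed.

Definition clamp (r x : R) := if x < - r then - r else if r < x then r else x.

Lemma clamp_bound r x : 0 <= r -> `|clamp r x| <= r.
Proof.
move=> r0; rewrite /clamp ler_norml.
case: ifP => h1; first lra.
case: ifP => h2; first lra.
move/negbT: h1; move/negbT: h2; rewrite -!leNgt => h1 h2; lra.
Qed.

Lemma clamp_lip r x y : 0 <= r -> `|clamp r x - clamp r y| <= `|x - y|.
Proof.
move=> r0.
have h5 : x - y <= `|x - y| := ler_norm _.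
have h6 : y - x <= `|x - y| by rewrite distrC ler_norm.
rewrite ler_norml /clamp.
case: (ltP x (-r)) => h1; case: (ltP r x) => h2;
case: (ltP y (-r)) => h3; case: (ltP r y) => h4; apply/andP; split; lra.
Qed.

Lemma clamp_id r x : `|x| <= r -> clamp r x = x.
Proof.
rewrite ler_norml /clamp => /andP[h1 h2].
case: ifP => h3; first lra.
case: ifP => h4; first lra.
by [].
Qed.

End Norms.

Section Fix.
Variable R : realType.
Variable n : nat.
Variable lam : 'I_n -> R.
Variable W : 'M[R]_n.
Variables w g r : R.
Hypothesis w0 : 0 <= w.
Hypothesis g0 : 0 < g.
Hypothesis r0 : 0 <= r.
Hypothesis r1 : r <= 1.
Hypothesis nr : n%:R * r <= 1/4.
Hypothesis rg : r * g = 2 * w.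
Hypothesis gap : forall i j : 'I_n, i != j -> g <= `|lam j - lam i|.
Hypothesis Wb : forall i j, `|W i j| <= w.

Definition Phi (X : 'M[R]_n) : 'M[R]_n :=
  \matrix_(i, j) (if i == j then 0 else
     (W i j + (W *m X) i j - (W *m X) i i * X i j) / (lam j - lam i)).

Lemma WX_bound {Y : 'M[R]_n} {c} : (forall i j, `|Y i j| <= c) ->
  forall i j, `|(W *m Y) i j| <= n%:R * (w * c).
Proof. by move=> HY i j; rewrite mxE; apply: sum_bound. Qed.

Lemma phi_bound (Y : 'M[R]_n) : (forall i j, `|Y i j| <= r) -> forall i j, `|Phi Y i j| <= r.
Proof.
move=> HY i j; rewrite mxE; case: eqP => [_|/eqP ij]; first by rewrite normr0.
have -> : r = (2 * w) / g by rewrite -rg mulfK // gt_eqF.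
apply: div_bound => //; first exact: gap.
have h1 := WX_bound HY i j; have h2 := WX_bound HY i i.
have h3 := HY i j; have h4 := Wb i j.
apply: (le_trans (ler_normB _ _)); rewrite normrM.
apply: (le_trans (lerD (ler_normD _ _) (lexx _))).
have a0 : 0 <= n%:R :> R by [].
have nr' := nr.
set a := n%:R in a0 h1 h2 nr' *.
set p := `|W i j| in h4 *; set q := `|(W *m Y) i j| in h1 *.
set s := `|(W *m Y) i i| in h2 *; set t := `|Y i j| in h3 *.
have s0 : 0 <= s by rewrite normr_ge0.
have t0 : 0 <= t by rewrite normr_ge0.
have : s * t <= a * (w * r) * r by apply: ler_pM.
have : a * r * w <= 1/4 * w by apply: ler_wpM2r.
have : a * (w * r) * r <= a * (w * r).
  by apply: ler_piMr => //; apply: mulr_ge0 => //; apply: mulr_ge0.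
have h4' : p <= w by [].
lra.
Qed.

Lemma phi_lip (Y Z : 'M[R]_n) : (forall i j, `|Y i j| <= r) -> (forall i j, `|Z i j| <= r) ->
  forall i j, `|Phi Y i j - Phi Z i j| <= (3 * n%:R * w / g) * `|Y - Z|.
Proof.
move=> HY HZ i j; rewrite [Phi Y _ _]mxE [Phi Z _ _]mxE; case: eqP => [_|/eqP ij].
  rewrite subrr normr0; apply: mulr_ge0 => //; apply: divr_ge0; last exact: ltW.
  by apply: mulr_ge0 => //; apply: mulr_ge0.
rewrite -mulrBl.
have -> : 3 * n%:R * w / g * `|Y - Z| = (3 * n%:R * w * `|Y - Z|) / g by rewrite mulrAC.
apply: div_bound => //; first exact: gap.
set d := `|Y - Z|.
have HD : forall k l, `|(Y - Z) k l| <= d by move=> k l; apply: mxnorm_ge.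
have e1 : forall k l, (W *m Y) k l - (W *m Z) k l = (W *m (Y - Z)) k l.
  by move=> k l; rewrite mulmxBr !mxE.
have -> : W i j + (W *m Y) i j - (W *m Y) i i * Y i j -
    (W i j + (W *m Z) i j - (W *m Z) i i * Z i j) =
    ((W *m Y) i j - (W *m Z) i j) - (W *m Y) i i * (Y i j - Z i j)
     - ((W *m Y) i i - (W *m Z) i i) * Z i j by ring.
rewrite !e1.
have h1 := WX_bound HD i j; have h2 := WX_bound HD i i.
have h3 := WX_bound HY i i; have h4 := HZ i j.
have h5 : `|Y i j - Z i j| <= d by have := HD i j; rewrite !mxE.
apply: (le_trans (ler_normB _ _)).
apply: (le_trans (lerD (ler_normB _ _) (lexx _))).
rewrite !normrM.
have a0 : 0 <= n%:R :> R by [].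
have nr' := nr.
have d0 : 0 <= d by rewrite normr_ge0.
set a := n%:R in a0 h1 h2 h3 nr' *.
set p := `|(W *m (Y - Z)) i j| in h1 *.
set q := `|(W *m (Y - Z)) i i| in h2 *.
set s := `|(W *m Y) i i| in h3 *.
set t := `|Y i j - Z i j| in h5 *.
set u := `|Z i j| in h4 *.
have s0 : 0 <= s by rewrite normr_ge0.
have t0 : 0 <= t by rewrite normr_ge0.
have q0 : 0 <= q by rewrite normr_ge0.
have u0 : 0 <= u by rewrite normr_ge0.
have k1 : s * t <= a * (w * r) * d by apply: ler_pM.
have k2 : q * u <= a * (w * d) * r by apply: ler_pM.
have awd : 0 <= a * w * d by apply: mulr_ge0 => //; apply: mulr_ge0.
have k3 : a * w * d * r <= a * w * d by apply: ler_piMr.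
lra.
Qed.

Lemma q_bound : 0 <= 3 * n%:R * w / g /\ 3 * n%:R * w / g < 1.
Proof.
have a0 : 0 <= n%:R :> R by [].
split; first by apply: divr_ge0; [apply: mulr_ge0 => //; apply: mulr_ge0 | exact: ltW].
rewrite ltr_pdivrMr // mul1r.
have : n%:R * r * g <= 1/4 * g by apply: ler_wpM2r => //; exact: ltW.
rewrite -mulrA rg => h.
have e1 : n%:R * (2 * w) = 2 * (n%:R * w) by ring.
have e2 : 3 * n%:R * w = 3 * (n%:R * w) by ring.
rewrite e2; rewrite e1 in h; set m := n%:R * w in h *. have g0' : 0 < g by exact: g0. lra.
Qed.

Lemma phi_fix : exists X : 'M[R]_n, X = Phi X /\ forall i j, `|X i j| <= r.
Proof.
pose cl (Y : 'M[R]_n) := map_mx (clamp r) Y.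
have clb : forall Y i j, `|cl Y i j| <= r by move=> Y i j; rewrite mxE; apply: clamp_bound.
have cll : forall Y Z, `|cl Y - cl Z| <= `|Y - Z|.
  move=> Y Z; apply: mxnorm_le => // i j.
  rewrite !mxE; apply: le_trans (clamp_lip _ _ r0) _.
  by have := mxnorm_ge (Y - Z) i j; rewrite !mxE.
pose f : MM R n -> MM R n := fun Y => Phi (cl Y).
have [q0 q1] := q_bound.
have : exists X : MM R n, X = f X.
  apply: (contr_fix q0 q1) => Y Z.
  apply: (@mxnorm_le _ n n (f Y - f Z)).
    by apply: mulr_ge0.
  move=> i j.
  have -> : (f Y - f Z) i j = Phi (cl Y) i j - Phi (cl Z) i j by rewrite !mxE.
  have h := phi_lip (clb Y) (clb Z) i j.
  apply: le_trans h _; apply: ler_wpM2l => //.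
case=> X hX.
have bX : forall i j, `|X i j| <= r by move=> i j; rewrite hX; apply: phi_bound.
have eX : cl X = X by apply/matrixP => i j; rewrite mxE clamp_id.
by exists X; split => //; rewrite {1}hX /f eX.
Qed.

End Fix.

Lemma char_poly_sim (F : fieldType) n (A V D : 'M[F]_n) :
  \det V != 0 -> A *m V = V *m D -> char_poly A = char_poly D.
Proof.
move=> dV AV.
have key : char_poly_mx A *m map_mx polyC V = map_mx polyC V *m char_poly_mx D.
  rewrite /char_poly_mx mulmxBl mulmxBr -!map_mxM AV.
  by rewrite scalar_mxC.
have := congr1 determinant key; rewrite !det_mulmx det_map_mx [RHS]mulrC.
apply: mulIf; by rewrite polyC_eq0.
Qed.

Section Cons.
Variable R : realType.
Variable n : nat.
Variable lam : 'I_n -> R.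
Variable W : 'M[R]_n.
Variables w g r : R.
Hypothesis w0 : 0 <= w.
Hypothesis g0 : 0 < g.
Hypothesis r0 : 0 <= r.
Hypothesis r1 : r <= 1.
Hypothesis nr : n%:R * r <= 1/4.
Hypothesis rg : r * g = 2 * w.
Hypothesis gap : forall i j : 'I_n, i != j -> g <= `|lam j - lam i|.
Hypothesis Wb : forall i j, `|W i j| <= w.
Hypothesis Wd : forall i, W i i = 0.
Variable X : 'M[R]_n.
Hypothesis hX : X = Phi lam W X.
Hypothesis bX : forall i j, `|X i j| <= r.

Definition dd i := lam i - (W *m X) i i.
Definition AA : 'M[R]_n := diag_mx (\row_i dd i) + W.
Definition VV : 'M[R]_n := 1%:M + X.

Lemma Xd i : X i i = 0.
Proof. by rewrite hX mxE eqxx. Qed.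

Lemma Xoff i j : i != j ->
  X i j * (lam j - lam i) = W i j + (W *m X) i j - (W *m X) i i * X i j.
Proof.
move=> ij.
have ne : lam j - lam i != 0.
  have := gap ij; apply: contraTneq => ->; rewrite normr0 -ltNge; exact: g0.
by rewrite {1}hX mxE (negbTE ij) divfK.
Qed.

Lemma AV : AA *m VV = VV *m diag_mx (\row_i lam i).
Proof.
rewrite /AA /dd mulmxDl mul_diag_mx mul_mx_diag /VV mulmxDr mulmx1.
have XO := Xoff; have XD := Xd.
set P := W *m X in XO *.
apply/matrixP => i j; rewrite !mxE.
case: (eqVneq i j) => [<-|ij].
  rewrite XD Wd /=; ring.
have h := XO _ _ ij.
rewrite /P !mxE in h.
have f0 : (false%:R : R) = 0 by [].
rewrite f0 !add0r.
have e : lam j * X i j = lam i * X i j + X i j * (lam j - lam i) by ring.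
rewrite [X i j * lam j]mulrC e h; ring.
Qed.

Lemma detV : \det VV != 0.
Proof.
apply/negP => /det0P [v v0 hv].
rewrite /VV mulmxDr mulmx1 in hv.
have e : v = - (v *m X) by apply/eqP; rewrite -subr_eq0 opprK hv.
have nb : `|v| <= n%:R * (`|v| * r).
  apply: mxnorm_le; first by apply: mulr_ge0 => //; apply: mulr_ge0.
  move=> i j; rewrite {1}e mxE normrN mxE; apply: sum_bound => k.
    exact: mxnorm_ge.
  exact: bX.
have nb2 : n%:R * (`|v| * r) <= 1/4 * `|v|.
  by rewrite mulrCA mulrC; apply: ler_wpM2r.
have : `|v| <= 0 by lra.
rewrite normr_le0 => /eqP v00; by rewrite v00 eqxx in v0.
Qed.

Lemma charA : char_poly AA = \prod_(i < n) ('X - (lam i)%:P).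
Proof.
rewrite (char_poly_sim detV AV) char_poly_trig ?diag_mx_is_trig //.
by apply: eq_bigr => i _; rewrite !mxE eqxx mulr1n.
Qed.

Lemma AAd i : AA i i = dd i.
Proof. by rewrite !mxE eqxx mulr1n Wd addr0. Qed.

Lemma AAo i j : i != j -> AA i j = W i j.
Proof. by move=> ij; rewrite !mxE (negbTE ij) mulr0n add0r. Qed.

Lemma dd_near i : `|dd i - lam i| <= n%:R * (w * r).
Proof. by rewrite /dd addrAC subrr add0r normrN; apply: WX_bound. Qed.

Lemma K_bound : n%:R * w <= g / 8.
Proof.
have : n%:R * r * g <= 1/4 * g by apply: ler_wpM2r => //; exact: ltW.
rewrite -mulrA rg => h.
have e1 : n%:R * (2 * w) = 2 * (n%:R * w) by ring.
rewrite e1 in h; set m := n%:R * w in h *.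
have g0' : 0 < g by exact: g0.
lra.
Qed.

Lemma SSP_AA (Y : 'M[R]_n) : map2_mx *%R 1%:M Y = 0 -> AA *m Y - Y *m AA = 0 -> Y = 0.
Proof.
move=> hI hC.
have Yd : forall i, Y i i = 0.
  by move=> i; have := hI; move/matrixP => /(_ i i); rewrite !mxE eqxx mulr1n mul1r.
have comm : forall i j, (dd i - dd j) * Y i j = (Y *m W) i j - (W *m Y) i j.
  move=> i j; have := hC; move/matrixP => /(_ i j) h.
  rewrite /AA mulmxDl mulmxDr mul_diag_mx mul_mx_diag !mxE in h.
  rewrite !mxE; lra.
set m := `|Y|.
have m0 : 0 <= m by apply: normr_ge0.
have Kb := K_bound.
have a0 : 0 <= n%:R :> R by [].
set K := n%:R * w in Kb.
have K0 : 0 <= K by apply: mulr_ge0.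
have Kr : K * r <= K by apply: ler_piMr.
have g0' : 0 < g by exact: g0.
set G := g - 2 * (K * r).
have G0 : 0 < G by rewrite /G; lra.
have GK : 0 < G - 2 * K by rewrite /G; lra.
have bnd : forall i j, `|Y i j| <= 2 * (K * m) / G.
  move=> i j; case: (eqVneq i j) => [<-|ij].
    by rewrite Yd normr0; apply: divr_ge0; [apply: mulr_ge0 => //; apply: mulr_ge0 | exact: ltW].
  rewrite ler_pdivlMr //.
  have h1 : `|(Y *m W) i j| <= n%:R * (m * w) by rewrite mxE; apply: sum_bound => k; [exact: (mxnorm_ge Y) | exact: Wb].
  have h2 : `|(W *m Y) i j| <= n%:R * (w * m) by rewrite mxE; apply: sum_bound => k; [exact: Wb | exact: (mxnorm_ge Y)].
  have h3 : `|(Y *m W) i j - (W *m Y) i j| <= 2 * (K * m).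
    apply: le_trans (ler_normB _ _) _.
    have e1 : n%:R * (m * w) = K * m by rewrite /K; ring.
    have e2 : n%:R * (w * m) = K * m by rewrite /K; ring.
    rewrite e1 in h1; rewrite e2 in h2; lra.
  have h4 : G <= `|dd i - dd j|.
    have n1 := dd_near i; have n2 := dd_near j.
    have gp := gap ij.
    have e : lam j - lam i = (dd i - dd j) * (-1) + (dd i - lam i) - (dd j - lam j) by ring.
    rewrite e in gp.
    have t1 := ler_normB ((dd i - dd j) * (-1) + (dd i - lam i)) (dd j - lam j).
    have t2 := ler_normD ((dd i - dd j) * (-1)) (dd i - lam i).
    rewrite normrM normrN normr1 mulr1 in t2.
    have e3 : n%:R * (w * r) = K * r by rewrite /K; ring.
    rewrite e3 in n1 n2; rewrite /G; lra.
  rewrite -(comm i j) normrM mulrC in h3.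
  apply: le_trans h3; apply: ler_wpM2l => //.
have : m <= 2 * (K * m) / G by apply: mxnorm_le => //; apply: divr_ge0; [apply: mulr_ge0 => //; apply: mulr_ge0 | exact: ltW].
rewrite ler_pdivlMr // => hm.
have : m * (G - 2 * K) <= 0 by lra.
rewrite pmulr_lle0 // => mle.
by apply/eqP; rewrite -normr_le0.
Qed.

Definition cc i := \sum_k (if k == i then 0 else W i k * W k i / (lam i - lam k)).

Lemma dd_expand i : `|(W *m X) i i - cc i| <= n%:R * (w * (2 * (n%:R * (w * r))) / g).
Proof.
rewrite mxE /cc -sumrB.
apply: le_trans (ler_norm_sum _ _ _) _.
set B := w * (2 * (n%:R * (w * r))) / g.
have -> : n%:R * B = \sum_(k < n) B by rewrite sumr_const card_ord mulr_natl.
apply: ler_sum => k _.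
have a0 : 0 <= n%:R :> R by [].
have B0 : 0 <= B.
  rewrite /B; apply: divr_ge0; last exact: ltW.
  by apply: mulr_ge0 => //; apply: mulr_ge0 => //; apply: mulr_ge0 => //; apply: mulr_ge0.
case: (eqVneq k i) => [->|ki]; first by rewrite Wd mul0r subr0 normr0.
rewrite {1}hX mxE (negbTE ki).
set P := W *m X.
have -> : W i k * ((W k i + P k i - P k k * X k i) / (lam i - lam k)) -
    W i k * W k i / (lam i - lam k) =
    W i k * ((P k i - P k k * X k i) / (lam i - lam k)) by ring.
rewrite normrM /B -mulrA; apply: ler_pM; [exact: normr_ge0 | exact: normr_ge0 | exact: Wb | ].
apply: div_bound; [exact: g0 | exact: gap ki | ].
have h1 : `|P k i| <= n%:R * (w * r) by rewrite /P mxE; apply: sum_bound => l; [exact: Wb | exact: bX].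
have h2 : `|P k k| <= n%:R * (w * r) by rewrite /P mxE; apply: sum_bound => l; [exact: Wb | exact: bX].
have h3 := bX k i.
apply: le_trans (ler_normB _ _) _; rewrite normrM.
have t0 : 0 <= `|X k i| by apply: normr_ge0.
have h4 : `|P k k| * `|X k i| <= n%:R * (w * r) * 1.
  by apply: ler_pM => //; apply: le_trans r1.
lra.
Qed.

End Cons.

Section Helpers.
Variable R : realType.

Lemma seq_small (T : eqType) (s : seq T) (P : R -> T -> Prop) :
  (forall x, x \in s -> exists e, 0 < e /\ forall e', 0 < e' -> e' <= e -> P e' x) ->
  exists e, 0 < e /\ forall e', 0 < e' -> e' <= e -> forall x, x \in s -> P e' x.
Proof.
elim: s => [|y s IH] H.
  by exists 1; split => // e' _ _ x; rewrite in_nil.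
have [ey [ey0 Hy]] := H y (mem_head _ _).
have [es [es0 Hs]] : exists e, 0 < e /\ forall e', 0 < e' -> e' <= e -> forall x, x \in s -> P e' x.
  by apply: IH => x xs; apply: H; rewrite in_cons xs orbT.
exists (Num.min ey es); split; first by rewrite lt_min ey0 es0.
move=> e' e'0; rewrite le_min => /andP[h1 h2] x; rewrite in_cons => /orP[/eqP->|xs].
  exact: Hy.
exact: Hs.
Qed.

Lemma exists_small (I : finType) (a : I -> R) :
  (forall i, 0 < a i) -> exists e, 0 < e /\ forall i, e <= a i.
Proof.
move=> H.
have [e [e0 He]] := @seq_small _ (enum I) (fun e i => e <= a i)
   (fun i _ => ex_intro _ (a i) (conj (H i) (fun e' _ h => h))).
by exists e; split => // i; apply: He => //; rewrite mem_enum.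
Qed.

Lemma exists_large (I : finType) (a : I -> R) :
  exists M, 0 < M /\ forall i, a i <= M.
Proof.
exists (1 + \sum_i `|a i|); split.
  by apply: (lt_le_trans ltr01); rewrite lerDl sumr_ge0.
move=> i; rewrite (bigD1 i) //= addrCA.
apply: le_trans (ler_norm _) _.
by rewrite lerDl addr_ge0 // sumr_ge0.
Qed.

Lemma pick_eps (s : seq (R * R)) :
  (forall p, p \in s -> 0 < p.1 /\ 0 < p.2) ->
  exists e, 0 < e /\ forall p, p \in s -> p.1 * e <= p.2.
Proof.
move=> H.
have [e [e0 He]] : exists e, 0 < e /\ forall e', 0 < e' -> e' <= e ->
    forall p, p \in s -> p.1 * e' <= p.2.
  apply: (@seq_small _ s (fun e p => p.1 * e <= p.2)) => p ps.
  have [h1 h2] := H p ps.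
  exists (p.2 / p.1); split; first by apply: divr_gt0.
  move=> e' _ h; rewrite mulrC -ler_pdivlMr //.
by exists e; split => // p ps; apply: He.
Qed.

End Helpers.

Section Poly.
Variable R : realType.
Variable n : nat.
Variable lam : 'I_n -> R.
Hypothesis lam_inj : injective lam.
Variable e : rel 'I_n.
Hypothesis e_irr : forall i, e i i = false.
Hypothesis nbr : forall i, exists k, e i k.

Definition pp (i : 'I_n) : {poly R} :=
  \sum_(k < n) (if e i k then (lam i - lam k)^-1 *: 'X^(2 * (i + k)) else 0).

Lemma pp_nz i : pp i != 0.
Proof.
have [k0 ek0] := nbr i.
apply/eqP => h; have := congr1 (fun p : {poly R} => p`_(2 * (i + k0))) h.
rewrite coef0 /pp coef_sum.
have e1 : forall k, (if e i k then (lam i - lam k)^-1 *: 'X^(2 * (i + k)) else 0)`_(2 * (i + k0))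
    = if e i k then (lam i - lam k)^-1 * (2 * (i + k0) == 2 * (i + k))%N%:R else 0.
  by move=> k; case: (e i k); rewrite ?coefZ ?coefXn ?coef0.
rewrite (eq_bigr _ (fun k _ => e1 k)) (bigD1 k0) //= ek0 eqxx mulr1 big1.
  rewrite addr0 => /eqP; rewrite invr_eq0 subr_eq0 => /eqP /lam_inj ik.
  by rewrite ik e_irr in ek0.
move=> k kk0; case: (e i k) => //.
rewrite eqn_mul2l /= eqn_add2l.
have -> : (k0 == k :> nat) = false.
  by apply/negbTE; rewrite eq_sym.
by rewrite mulr0.
Qed.

Lemma exists_t : exists t : R, 0 < t /\ forall i, (pp i).[t] != 0.
Proof.
set Q := \prod_i pp i.
have Q0 : Q != 0 by apply/prodf_neq0 => i _; apply: pp_nz.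
have [/hasP [m _ hm]|hn] := boolP (has (fun m : nat => Q.[m.+1%:R] != 0) (iota 0 (size Q))).
  exists m.+1%:R; split; first by rewrite ltr0Sn.
  move=> i; move: hm; rewrite /Q horner_prod => /prodf_neq0; apply.
  by [].
exfalso.
set rs := [seq (m.+1)%:R : R | m <- iota 0 (size Q)].
have hr : all (root Q) rs.
  apply/allP => x /mapP [m hm ->]; apply/rootP.
  by apply/eqP; apply: contraR hn => h; apply/hasP; exists m.
have hu : uniq rs.
  rewrite map_inj_uniq ?iota_uniq //.
  by move=> a b /eqP; rewrite eqr_nat eqSS => /eqP.
by have := max_poly_roots Q0 hr hu; rewrite size_map size_iota ltnn.
Qed.

End Poly.

Unset Implicit Arguments.

Theorem lemma2p3 (R : realType) (n : nat) (lam : 'I_n -> R) (F : seq R)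
    (e : rel 'I_n) :
  (2 <= n)%N -> injective lam -> simple_graph e -> connected_graph e ->
  exists A : 'M[R]_n,
    [/\ in_SG e A, SSP A, spec_eq A lam & forall i : 'I_n, A i i \notin F].
Proof.
move=> n2 linj [esym eirr] conn.
have nbr : forall i, exists k, e i k.
  move=> i.
  have [j ij] : exists j : 'I_n, j != i.
    have h0 : (0 < n)%N by apply: leq_trans n2.
    have h1 : (1 < n)%N by [].
    case: (eqVneq i (Ordinal h0)) => [->|ne].
      by exists (Ordinal h1); rewrite -val_eqE.
    by exists (Ordinal h0); rewrite eq_sym.
  have := conn i j; case/connectP => p; case: p => [_ /= ji|a p /= /andP [eia _] _].
    by rewrite ji eqxx in ij.
  by exists a.
have [g [g0 gap]] : exists g, 0 < g /\ forall i j : 'I_n, i != j -> g <= `|lam j - lam i|.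
  pose a := fun p : 'I_n * 'I_n => if p.1 == p.2 then 1 else `|lam p.2 - lam p.1|.
  have apos : forall p, 0 < a p.
    move=> [i j]; rewrite /a /=; case: eqVneq => // ij.
    rewrite normr_gt0 subr_eq0; apply/negP => /eqP/linj ji.
    by rewrite ji eqxx in ij.
  have [g [g0 H]] := exists_small apos.
  by exists g; split => // i j ij; have := H (i, j); rewrite /a /= (negbTE ij).
have [dl [dl0 dF]] : exists dl, 0 < dl /\
    forall i f, f \in F -> f != lam i -> dl <= `|f - lam i|.
  pose a := fun p : 'I_n * 'I_(size F) =>
        if nth 0 F p.2 == lam p.1 then 1 else `|nth 0 F p.2 - lam p.1|.
  have apos : forall p, 0 < a p.
    move=> [i k]; rewrite /a /=; case: eqVneq => // fl.
    by rewrite normr_gt0 subr_eq0.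
  have [dl [dl0 H]] := exists_small apos.
  exists dl; split => // i f fF fl.
  have hi : (index f F < size F)%N by rewrite index_mem.
  have := H (i, Ordinal hi).
  by rewrite /a /= nth_index // (negbTE fl).
have [t [t0 ht]] := exists_t linj eirr nbr.
pose W0 : 'M[R]_n := \matrix_(i, k) (if e i k then t ^+ (i + k) else 0).
have W0d : forall i, W0 i i = 0 by move=> i; rewrite mxE eirr.
have W0s : forall i k, W0 i k = W0 k i by move=> i k; rewrite !mxE esym addnC.
have ccW0 : forall i, cc lam W0 i = (pp lam e i).[t].
  move=> i; rewrite /cc /pp horner_sum; apply: eq_bigr => k _.
  case: (eqVneq k i) => [->|ki]; first by rewrite eirr horner0.
  rewrite !mxE (esym k i); case: (e i k); last by rewrite mul0r mul0r horner0.
  rewrite hornerZ hornerXn -exprD mulrC; congr (_ * _); congr (_ ^+ _).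
  by rewrite [(k + i)%N]addnC addnn -mul2n.
have kpos : forall i, 0 < `|cc lam W0 i| by move=> i; rewrite normr_gt0 ccW0 ht.
have [ka [ka0 hka]] := exists_small kpos.
have [w0 [w00 hw0]] := @exists_large R _ (fun p : 'I_n * 'I_n => `|W0 p.1 p.2|).
set N : R := n%:R.
have N1 : 1 <= N by rewrite /N ler1n; apply: leq_trans n2.
have N0 : 0 < N by apply: lt_le_trans N1.
set cs := [:: (8 * N * w0, g); (4 * N * w0 ^+ 2, dl * g);
    (8 * N ^+ 2 * w0 ^+ 3, ka * g ^+ 2); (1, 1)].
have csp : forall p, p \in cs -> 0 < p.1 /\ 0 < p.2.
  move=> p; rewrite !inE => /or4P [] /eqP -> /=;
  by split; rewrite ?mulr_gt0 ?exprn_gt0.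
have [eps [eps0 heps]] := pick_eps csp.
have c1 : 8 * N * w0 * eps <= g by apply: (heps (_, _)); rewrite !inE eqxx.
have c2 : 4 * N * w0 ^+ 2 * eps <= dl * g by apply: (heps (_, _)); rewrite !inE eqxx ?orbT.
have c3 : 8 * N ^+ 2 * w0 ^+ 3 * eps <= ka * g ^+ 2 by apply: (heps (_, _)); rewrite !inE eqxx ?orbT.
have c4 : 1 * eps <= 1 by apply: (heps (_, _)); rewrite !inE eqxx ?orbT.
rewrite mul1r in c4.
set w := eps * w0.
have w0' : 0 <= w by apply: mulr_ge0; apply: ltW.
set r := 2 * w / g.
have rg : r * g = 2 * w by rewrite /r divfK // gt_eqF.
have r0 : 0 <= r by apply: divr_ge0 => //; [apply: mulr_ge0 | apply: ltW].
have nr : N * r <= 1/4.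
  rewrite -(ler_pM2r g0) -mulrA rg.
  have e1 : N * (2 * w) = 2 * (N * w0 * eps) by rewrite /w; ring.
  have e2 : 8 * N * w0 * eps = 8 * (N * w0 * eps) by ring.
  rewrite e1; rewrite e2 in c1.
  have g0' : 0 < g by [].
  set m := N * w0 * eps in c1 *; lra.
have r1 : r <= 1.
  have : 0 <= (N - 1) * r by apply: mulr_ge0 => //; rewrite subr_ge0.
  have nr' : N * r <= 1/4 by []. lra.
set W : 'M[R]_n := eps *: W0.
have Wb : forall i j, `|W i j| <= w.
  move=> i j; rewrite mxE normrM gtr0_norm //; apply: ler_wpM2l; first exact: ltW.
  exact: (hw0 (i, j)).
have Wd : forall i, W i i = 0 by move=> i; rewrite mxE W0d mulr0.
have [X [hX bX]] := phi_fix w0' g0 r0 r1 nr rg gap Wb.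
exists (AA lam W X); split.
- split.
    rewrite /AA raddfD /= tr_diag_mx; congr (_ + _).
    by apply/matrixP => i j; rewrite !mxE esym addnC.
  move=> i j ij; rewrite AAo // /W !mxE.
  case: (e i j) => /=; last by rewrite mulr0 eqxx.
  by rewrite mulf_neq0 // ?gt_eqF // exprn_gt0.
- move=> Y _ _ hI hC; exact: (SSP_AA w0' g0 r1 nr rg gap Wb bX hI hC).
- exact: (charA g0 r0 nr gap Wd hX bX).
move=> i; rewrite (AAd _ Wd); apply/negP => hF.
have nearI := dd_near lam Wb bX i.
have g0' : 0 < g by [].
have small : N * (w * r) < dl.
  rewrite -(ltr_pM2r g0).
  have e1 : N * (w * r) * g = N * (w * (r * g)) by ring.
  rewrite e1 rg /w.
  set K := N * w0 ^+ 2.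
  have K0 : 0 <= K by apply: mulr_ge0; [apply: ltW | apply: exprn_ge0; apply: ltW].
  have e2 : N * (eps * w0 * (2 * (eps * w0))) = 2 * (K * (eps * eps)) by rewrite /K; ring.
  have e3 : 4 * N * w0 ^+ 2 * eps = 4 * (K * eps) by rewrite /K; ring.
  have h1 : K * (eps * eps) <= K * eps.
    by apply: ler_wpM2l => //; apply: ler_piMr => //; apply: ltW.
  have dg : 0 < dl * g by apply: mulr_gt0.
  rewrite e2; rewrite e3 in c2; lra.
case: (eqVneq (dd lam W X i) (lam i)) => [eq|ne]; last first.
  have := dF i _ hF ne; rewrite -/N in nearI; lra.
have P0 : (W *m X) i i = 0.
  by move: eq; rewrite /dd => /eqP; rewrite subr_eq addrC -subr_eq subrr eq_sym => /eqP.
have ex := dd_expand w0' g0 r0 r1 gap Wb Wd hX bX i.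
rewrite P0 sub0r normrN -/N in ex.
have ccs : cc lam W i = eps * eps * cc lam W0 i.
  rewrite /cc mulr_sumr; apply: eq_bigr => k _.
  case: eqP => _; first by rewrite mulr0.
  rewrite !mxE; ring.
have lo : eps * eps * ka <= `|cc lam W i|.
  rewrite ccs normrM (ger0_norm (mulr_ge0 (ltW eps0) (ltW eps0))).
  by apply: ler_wpM2l; [apply: mulr_ge0; apply: ltW | apply: hka].
set err := N * (w * (2 * (N * (w * r))) / g) in ex.
have hi : err < eps * eps * ka.
  have gg0 : 0 < g * g by apply: mulr_gt0.
  rewrite -(ltr_pM2r gg0).
  have e3 : err * (g * g) = 2 * N * N * w * w * (r * g).
    by rewrite /err; field; rewrite gt_eqF.
  rewrite e3 rg.
  set Z := N ^+ 2 * w0 ^+ 3 * eps.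
  have h : eps * eps * (8 * N ^+ 2 * w0 ^+ 3 * eps) <= eps * eps * (ka * g ^+ 2).
    by apply: ler_wpM2l => //; apply: mulr_ge0; apply: ltW.
  have E1 : 2 * N * N * w * w * (2 * w) = 4 * (eps * eps * Z) by rewrite /Z /w; ring.
  have E2 : eps * eps * (8 * N ^+ 2 * w0 ^+ 3 * eps) = 8 * (eps * eps * Z) by rewrite /Z; ring.
  have E3 : eps * eps * (ka * g ^+ 2) = eps * eps * ka * (g * g) by ring.
  have pos : 0 < eps * eps * ka * (g * g) by rewrite !mulr_gt0.
  rewrite E1; rewrite E2 E3 in h; lra.
lra.
Qed.
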